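(* Let $n\ge2$, let $\mathbf{q}\in\mathbb{R}^n$ with $\sum_i\mathbf{q}_i=1$ and $\mathbf{q}\neq\mathbf{1}/n$, let $1/n<t<1$, and let $i$ be an index with $\mathbf{q}_i=\min_j\mathbf{q}_j$. Define $\bar{\mathbf{q}}=\frac{\mathbf{1}}{n}+\frac{1}{1-n\mathbf{q}_i}\big(\mathbf{q}-\frac{\mathbf{1}}{n}\big)$. If $\bar{\mathbf{q}}\cdot\bar{\mathbf{q}}<t$, then there exists a maximizer $\mathbf{p}^*$ of $\mathbf{p}\cdot\mathbf{q}$ over $P(t)$ with $\mathbf{p}^*_i=0$.
   Context: $\mathbf{1}\in\mathbb{R}^n$ is the all-ones vector. $P(t)=\{\mathbf{p}\in\mathbb{R}^n:\mathbf{p}\ge0,\ \sum_i\mathbf{p}_i=1,\ \mathbf{p}\cdot\mathbf{p}\le t\}$. *)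

(* Defs.v *)
From HB Require Import structures.
From mathcomp Require Import all_boot all_order all_algebra.
From mathcomp Require Import reals.
Set Implicit Arguments. Unset Strict Implicit. Unset Printing Implicit Defensive.
Import Order.TTheory GRing.Theory Num.Theory.
Local Open Scope ring_scope.

Definition dot (R : realType) (n : nat) (p q : 'I_n -> R) : R :=
  \sum_(j < n) p j * q j.

Definition inP (R : realType) (n : nat) (t : R) (p : 'I_n -> R) : Prop :=
  (forall j, 0 <= p j) /\ \sum_(j < n) p j = 1 /\ dot p p <= t.

Definition unif (R : realType) (n : nat) : 'I_n -> R := fun _ => n%:R^-1.

Definition qbar (R : realType) (n : nat) (q : 'I_n -> R) (i : 'I_n) : 'I_n -> R :=
  fun j => n%:R^-1 + (1 - n%:R * q i)^-1 * (q j - n%:R^-1).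

(* Main.v *)
Require Import Defs.
From HB Require Import structures.
From mathcomp Require Import all_boot all_order all_algebra.
From mathcomp Require Import reals boolp classical_sets topology normedtype.
From mathcomp Require Import ring lra.
Import Order.TTheory GRing.Theory Num.Theory numFieldNormedType.Exports.
Local Open Scope ring_scope.
Set Implicit Arguments. Unset Strict Implicit.

Section Aux.
Variable R : realType.

Lemma max0_cases (x : R) :
  (0 <= x /\ Num.max x 0 = x) \/ (x < 0 /\ Num.max x 0 = 0).
Proof.
case: (leP 0 x) => h; [left; split => //; exact: max_l | right; split => //].
Qed.

Lemma max0_ge0 (x : R) : 0 <= Num.max x 0.
Proof. by case: (max0_cases x) => -[h ->] //; apply: ltW. Qed.

Lemma max0_ge (x : R) : x <= Num.max x 0.
Proof. by case: (max0_cases x) => -[h ->] //; apply: ltW. Qed.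

Lemma max0_sq (x : R) : Num.max x 0 * x = Num.max x 0 ^+ 2.
Proof. by case: (max0_cases x) => -[h ->]; rewrite expr2 ?mul0r. Qed.

Definition vv n (q : 'I_n -> R) (th : R) j := Num.max (q j - th) 0.
Definition SS n (q : 'I_n -> R) (th : R) := \sum_(j < n) vv q th j.
Definition NN n (q : 'I_n -> R) (th : R) := \sum_(j < n) vv q th j ^+ 2.

Lemma opt n (q : 'I_n -> R) (t th M : R) i :
  \sum_(j < n) q j = 1 -> (forall j, q j <= M) -> q i <= th ->
  0 < SS q th -> NN q th <= t * SS q th ^+ 2 ->
  (NN q th = t * SS q th ^+ 2 \/ forall j, vv q th j ^+ 2 = (M - th) * vv q th j) ->
  exists pstar : 'I_n -> R,
    [/\ inP t pstar,
        (forall p : 'I_n -> R, inP t p -> dot p q <= dot pstar q) &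
        pstar i = 0].
Proof.
move=> sq qM qith Sp Nle Hc.
set S := SS q th; set N := NN q th.
have S0 : S != 0 by rewrite gt_eqF.
exists (fun j => vv q th j / S); split.
- split; first by move=> j; rewrite divr_ge0 ?max0_ge0 // ltW.
  split; first by rewrite -mulr_suml mulfV.
  have -> : dot (fun j => vv q th j / S) (fun j => vv q th j / S) = N / S ^+ 2.
    rewrite /dot /N /NN mulr_suml; apply: eq_bigr => j _; field; exact: S0.
  by rewrite ler_pdivrMr ?exprn_gt0.
- have Hdq : dot (fun j => vv q th j / S) q = th + N / S.
    have -> : dot (fun j => vv q th j / S) q = \sum_(j < n) (vv q th j ^+ 2 / S + th * (vv q th j / S)).
      apply: eq_bigr => j _.
      have := max0_sq (q j - th); rewrite -/(vv q th j) => h.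
      rewrite -h; field; exact: S0.
    rewrite big_split /= -mulr_suml -mulr_sumr -mulr_suml -/(SS q th) -/S mulfV //.
    by rewrite mulr1 addrC.
  move=> p [p0 [p1 pt]].
  have Hb : dot p q <= th + dot p (vv q th).
    rewrite /dot -[X in X + _]mulr1 -p1 mulr_sumr -big_split /=.
    apply: ler_sum => j _.
    have := max0_ge (q j - th); rewrite -/(vv q th j) => h.
    have := p0 j; nra.
  rewrite Hdq.
  case: Hc => [HN | HM].
  + apply: (le_trans Hb); rewrite lerD2l.
    have H2 : 2 * S * dot p (vv q th) <= S ^+ 2 * dot p p + N.
      clearbody S; rewrite /dot /N /NN !mulr_sumr -big_split /=.
      apply: ler_sum => j _; rewrite -subr_ge0; have -> : S * S * (p j * p j) + vv q th j * vv q th j - 2 * S * (p j * vv q th j) = (S * p j - vv q th j) ^+ 2 by ring.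
      exact: sqr_ge0.
    rewrite ler_pdivlMr //.
    have : S ^+ 2 * dot p p <= S ^+ 2 * t by rewrite ler_pM2l ?exprn_gt0.
    have HN2 : N = t * S ^+ 2 by by rewrite /N HN.
    rewrite [S ^+ 2 * t]mulrC -HN2 => H3; nra.
  + have -> : N = (M - th) * S by rewrite /N /NN /S /SS mulr_sumr; apply: eq_bigr => j _; rewrite HM.
    rewrite mulfK //.
    have : dot p q <= M.
      rewrite /dot -[M]mul1r -p1 mulr_suml; apply: ler_sum => j _.
      by rewrite ler_wpM2l.
    lra.
- rewrite /vv; case: (max0_cases (q i - th)) => -[h ->]; last by rewrite mul0r.
  have -> : q i - th = 0 by lra.
  by rewrite mul0r.
Qed.

Lemma sum_cont (I : Type) (s : seq I) (F : I -> R -> R) :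
  (forall j, continuous (F j)) -> continuous (fun x => \sum_(j <- s) F j x).
Proof.
move=> HF; elim: s => [|a s IH] x.
  under eq_fun do rewrite big_nil. exact: cst_continuous.
under eq_fun do rewrite big_cons.
exact: (continuousD (f := F a) (g := fun x => \sum_(j <- s) F j x) (HF a x) (IH x)).
Qed.

Lemma vv_cont n (q : 'I_n -> R) j : continuous (fun th => vv q th j).
Proof.
move=> x; rewrite /vv.
have h1 : {for x, continuous (fun th : R => q j - th)}.
  apply: (@continuousB _ _ _ (fun=> q j) id x); [exact: cst_continuous | exact: cvg_id].
  have := @continuous_max R R (fun th : R => q j - th) (fun=> 0) x h1 (@cst_continuous _ _ 0 x). exact.
Qed.

Lemma h_cont n (q : 'I_n -> R) (t : R) :
  continuous (fun th => NN q th - t * SS q th ^+ 2).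
Proof.
have hN : continuous (NN q).
  apply: (sum_cont (F := fun j th => vv q th j ^+ 2)) => j y.
  have := continuousM (@vv_cont n q j y) (@vv_cont n q j y).
  exact.
have hS : continuous (SS q) by apply: (sum_cont (F := fun j th => vv q th j)) => j; exact: vv_cont.
move=> x.
have := continuousB (hN x) (continuousM (@cst_continuous _ _ t x) (continuousM (hS x) (hS x))).
exact.
Qed.

End Aux.

Theorem mainTheorem10 (R : realType) (n : nat) (q : 'I_n -> R) (t : R) (i : 'I_n) :
  (2 <= n)%N ->
  \sum_(j < n) q j = 1 ->
  q <> @unif R n ->
  n%:R^-1 < t -> t < 1 ->
  (forall j, q i <= q j) ->
  dot (qbar q i) (qbar q i) < t ->
  exists pstar : 'I_n -> R,
    [/\ inP t pstar,
        (forall p : 'I_n -> R, inP t p -> dot p q <= dot pstar q) &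
        pstar i = 0].
Proof.
move=> n2 sq qu tlo thi qimin qbt.
have n0 : (n%:R : R) != 0 by rewrite pnatr_eq0 -lt0n (leq_trans _ n2).
set jM := [arg max_(j > i) q j]%O.
have qM : forall j, q j <= q jM.
  by rewrite /jM; case: (arg_maxP q (isT : predT i)) => j _ H k; apply: H.
set M := q jM.
have sumc : forall c : R, \sum_(j < n) c = n%:R * c.
  by move=> c; rewrite sumr_const card_ord mulr_natl.
have qiM : q i < M.
  rewrite lt_neqAle qM andbT; apply/eqP => e; apply: qu.
  have allq : forall j, q j = q i by move=> j; apply/eqP; rewrite eq_le qimin andbT e qM.
  have : \sum_(j < n) q j = n%:R * q i by rewrite (eq_bigr _ (fun j _ => allq j)) sumc.
  rewrite sq => h1.
  apply: funext => j; rewrite /unif allq.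
  apply: (mulfI n0); rewrite mulfV //.
have Spos : forall th, th < M -> 0 < SS q th.
  move=> th thM; rewrite /SS (bigD1 jM) //=.
  have := max0_ge (q jM - th); rewrite -/(vv q th jM) => h.
  have : 0 <= \sum_(j < n | j != jM) vv q th j by apply: sumr_ge0 => j _; exact: max0_ge0.
  rewrite -/M in h; lra.
set j2 := [arg max_(j > i | q j < M) q j]%O.
have [j2M j2max] : q j2 < M /\ forall j, q j < M -> q j <= q j2.
  by rewrite /j2; case: (arg_maxP q (qiM : (fun j => q j < M) i)) => j H1 H2; split => // k; apply: H2.
set M2 := q j2.
have qiM2 : q i <= M2 by apply: j2max.
have vM2 : forall j, vv q M2 j ^+ 2 = (M - M2) * vv q M2 j.
  move=> j; rewrite /vv; case: (max0_cases (q j - M2)) => -[h ->]; last by rewrite mulr0 expr2 mulr0.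
  case: (ltP (q j) M) => hj.
    have : q j <= M2 by apply: j2max.
    move=> h2; have -> : q j - M2 = 0 by lra.
    by rewrite mulr0 expr2 mulr0.
  have -> : q j = M by apply/eqP; rewrite eq_le hj qM.
  by rewrite expr2.
case: (leP (NN q M2 - t * SS q M2 ^+ 2) 0) => hM2.
  apply: (@opt _ _ q t M2 M i sq qM qiM2 (Spos _ j2M)); first lra.
  by right.
have Sqi : SS q (q i) = 1 - n%:R * q i.
  have -> : 1 - n%:R * q i = \sum_(j < n) (q j - q i) by rewrite sumrB sq sumc.
  rewrite /SS; apply: eq_bigr => j _.
  rewrite /vv; case: (max0_cases (q j - q i)) => -[h ->] //.
  have := qimin j; lra.
have Sqi0 := Spos _ qiM.
have qbarE : forall j, qbar q i j = vv q (q i) j / SS q (q i).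
  move=> j; rewrite /qbar Sqi /vv.
  case: (max0_cases (q j - q i)) => -[h ->]; last by have := qimin j; lra.
  have : 1 - n%:R * q i != 0 by rewrite -Sqi gt_eqF.
  move=> hne; field; rewrite hne n0 //.
have hqi : NN q (q i) - t * SS q (q i) ^+ 2 < 0.
  have : dot (qbar q i) (qbar q i) = NN q (q i) / SS q (q i) ^+ 2.
    rewrite /dot /NN mulr_suml; apply: eq_bigr => j _; rewrite !qbarE.
    by rewrite expr2 expr2 invfM mulrACA.
  move=> e; rewrite e ltr_pdivrMr ?exprn_gt0 // in qbt; lra.
have [c cin hc] : exists2 c, c \in `[q i, M2] & NN q c - t * SS q c ^+ 2 = 0.
  apply: (IVT (f := fun th => NN q th - t * SS q th ^+ 2)) => //; first exact: continuous_subspaceT (@h_cont _ n q t).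
  rewrite ge_min le_max; apply/andP; split; apply/orP; [left|right]; apply: ltW => //.
move: cin; rewrite in_itv /= => /andP[c1 c2].
apply: (@opt _ _ q t c M i sq qM c1 (Spos _ (le_lt_trans c2 j2M))); first lra.
left; lra.
Qed.
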